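(* Let $\boldsymbol\mu$ be a ratio set and let $\boldsymbol\alpha$ be a derivative addendum for $\boldsymbol\mu$. For all $S,T\in\mathbb T$ generated by $\boldsymbol\mu$: if $S\prec^{\boldsymbol\mu}T$, $T\not\asymp1$, and $\boldsymbol\mu$ witnesses $T$, then $S'\prec^{\boldsymbol\alpha}T'$.
   Context: $\mathbb T$ is the differential field of real grid-based transseries over the ordered group $\mathfrak G$ of transmonomials, with $\prec,\asymp$; $\operatorname{mag}T$ is the dominant monomial of $T\ne0$. A ratio set is a finite $\boldsymbol\mu=\{\mu_1,\dots,\mu_n\}\subset\{\mathfrak g\prec1\}$; $\boldsymbol\mu^*$, $\boldsymbol\mu^+$ are the sets $\boldsymbol\mu^{\mathbf k}$ with $\mathbf k\in\mathbb Z^n$, $\mathbf k\ge\mathbf 0$ (resp. additionally $\mathbf k\ne\mathbf0$); $\mathfrak J^{\boldsymbol\mu}$ is the group generated, $\mathfrak J^{\boldsymbol\mu,\mathbf m}=\{\boldsymbol\mu^{\mathbf k}:\mathbf k\ge\mathbf m\}$. Monomials: $\mathfrak m\prec^{\boldsymbol\mu}\mathfrak n$ iff $\mathfrak m/\mathfrak n\in\boldsymbol\mu^+$; transseries: $A\prec^{\boldsymbol\mu}B$ iff each $\mathfrak a\in\operatorname{supp}A$ is $\prec^{\boldsymbol\mu}$ some $\mathfrak b\in\operatorname{supp}B$. $\boldsymbol\alpha$ witnesses nonzero $T$ iff $\operatorname{supp}T\subseteq(\operatorname{mag}T)\boldsymbol\alpha^*$, and generates $T$ iff $\operatorname{supp}T\subseteq\mathfrak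 J^{\boldsymbol\alpha,\mathbf m}$ for some $\mathbf m$. A derivative addendum for $\boldsymbol\mu$ is a ratio set $\boldsymbol\alpha$ with: (a) $\boldsymbol\alpha^*\supseteq\boldsymbol\mu$; (b) for every $\mathfrak m\in\mathfrak J^{\boldsymbol\mu}$, $\mathfrak m'$ is witnessed and generated by $\boldsymbol\alpha$; (c) for all $\mathfrak m,\mathfrak n\in\mathfrak J^{\boldsymbol\mu}$ with $\mathfrak m\prec^{\boldsymbol\mu}\mathfrak n$, $\mathfrak n\ne1$: $\mathfrak m'\prec^{\boldsymbol\alpha}\operatorname{mag}(\mathfrak n')$. *)

(* Defs.v *)
(* Transmonomials are written ADDITIVELY: the monomial 1 is 0, the product
   m*n is m + n, m/n is m - n, mu^k is \sum_i mu_i *~ k_i, and  g < 1  is  lt g 0. *)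
From HB Require Import structures.
From mathcomp Require Import all_boot all_order all_algebra.
From Stdlib Require Import Rdefinitions.
From mathcomp Require Import Rstruct.
Set Implicit Arguments. Unset Strict Implicit. Unset Printing Implicit Defensive.
Import Order.TTheory GRing.Theory Num.Theory.
Local Open Scope ring_scope.

(* An ordered abelian group (the group of transmonomials, with <).
   oglt x y  means  x < y  (i.e. x is asymptotically smaller than y). *)
Record ordered_group := OrderedGroup {
  og_sort :> zmodType;
  oglt : rel og_sort;
  oglt_irr : forall x, ~~ oglt x x;
  oglt_trans : forall x y z, oglt x y -> oglt y z -> oglt x z;
  oglt_total : forall x y, x != y -> oglt x y || oglt y x;
  oglt_add : forall x y z, oglt x y -> oglt (x + z) (y + z)
}.

Section Defs.
Variable G : ordered_group.

(* transseries: real coefficient functions on the monomials *)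
Definition ser := G -> R.

Definition mono (m : G) : ser := fun g => if g == m then 1 else 0.

Definition ratio_set (mu : seq G) : bool := all (fun g => oglt g 0) mu.

Definition rpow (mu : seq G) (k : 'I_(size mu) -> int) : G :=
  \sum_(i < size mu) (mu`_i) *~ k i.

Definition in_star (mu : seq G) (g : G) : Prop :=
  exists k : 'I_(size mu) -> int, (forall i, 0 <= k i) /\ g = rpow k.
Definition in_plus (mu : seq G) (g : G) : Prop :=
  exists k : 'I_(size mu) -> int,
    [/\ forall i, 0 <= k i, exists i, k i != 0 & g = rpow k].
Definition in_J (mu : seq G) (g : G) : Prop :=
  exists k : 'I_(size mu) -> int, g = rpow k.
Definition in_Jm (mu : seq G) (m : 'I_(size mu) -> int) (g : G) : Prop :=
  exists k : 'I_(size mu) -> int, (forall i, m i <= k i) /\ g = rpow k.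

Definition mprec (mu : seq G) (a b : G) : Prop := in_plus mu (a - b).
Definition sprec (mu : seq G) (A B : ser) : Prop :=
  forall a, A a != 0 -> exists2 b, B b != 0 & mprec mu a b.

Definition is_mag (T : ser) (m : G) : Prop :=
  T m != 0 /\ forall g, T g != 0 -> g != m -> oglt g m.

Definition asymp1 (T : ser) : Prop := is_mag T 0.

(* alpha witnesses T: supp T subset (mag T) alpha^*  (vacuous for T = 0) *)
Definition witnesses (alpha : seq G) (T : ser) : Prop :=
  forall g, T g != 0 -> exists2 m, is_mag T m & in_star alpha (g - m).

Definition generates (alpha : seq G) (T : ser) : Prop :=
  exists m : 'I_(size alpha) -> int, forall g, T g != 0 -> in_Jm m g.

Definition grid_based (T : ser) : Prop :=
  exists (alpha : seq G) (ms : seq G), ratio_set alpha /\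
    forall g, T g != 0 -> exists2 m, m \in ms & in_star alpha (g - m).

(* strong linearity of a derivation d on grid-based transseries:
   (sum_m t_m m)' = sum_m t_m m'  (the family being summable: for each g
   only finitely many m in supp T have g in supp m'). *)
Definition strongly_linear (d : ser -> ser) : Prop :=
  forall T, grid_based T -> forall g, exists s : seq G,
    (forall m, T m != 0 -> d (mono m) g != 0 -> m \in s) /\
    d T g = \sum_(m <- undup s) T m * d (mono m) g.

Definition derivative_addendum (d : ser -> ser) (mu alpha : seq G) : Prop :=
  [/\ ratio_set alpha,
      forall g, g \in mu -> in_star alpha g,
      forall m, in_J mu m ->
                  witnesses alpha (d (mono m)) /\ generates alpha (d (mono m))
    & forall m n, in_J mu m -> in_J mu n -> mprec mu m n -> n != 0 ->
                  exists2 h, is_mag (d (mono n)) h & sprec alpha (d (mono m)) (mono h)].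

End Defs.

(* Main.v *)
Require Import Defs.
From HB Require Import structures.
From mathcomp Require Import all_boot all_order all_algebra.
From Stdlib Require Import Rdefinitions.
From mathcomp Require Import Rstruct.
Import Order.TTheory GRing.Theory Num.Theory.
Local Open Scope ring_scope.
Set Implicit Arguments. Unset Strict Implicit.

Section Aux.
Variable G : ordered_group.
Implicit Types x y z g : G.

Definition ogle x y := (x == y) || oglt x y.

Lemma ogle_ltadd x y : oglt x 0 -> ogle y 0 -> oglt (x + y) 0.
Proof.
move=> hx /orP[/eqP->|hy]; first by rewrite addr0.
have := oglt_add y hx; rewrite add0r => h; exact: oglt_trans h hy.
Qed.

Lemma ogle_add x y : ogle x 0 -> ogle y 0 -> ogle (x + y) 0.
Proof.
move=> /orP[/eqP->|hx] hy; first by rewrite add0r.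
by apply/orP; right; apply: ogle_ltadd.
Qed.

Lemma mulrn_neg g n : oglt g 0 -> oglt (g *+ n.+1) 0.
Proof.
move=> hg; elim: n => [|n IH]; first by rewrite mulr1n.
by rewrite mulrS; apply: ogle_ltadd => //; apply/orP; right.
Qed.

Lemma mulrz_le g (k : int) : oglt g 0 -> 0 <= k -> ogle (g *~ k) 0.
Proof.
case: k => // n hg _; rewrite -pmulrn; case: n => [|n]; first by rewrite mulr0n /ogle eqxx.
by apply/orP; right; apply: mulrn_neg.
Qed.

Lemma mulrz_lt g (k : int) : oglt g 0 -> 0 <= k -> k != 0 -> oglt (g *~ k) 0.
Proof.
case: k => // n hg _; rewrite -pmulrn; case: n => [|n] // _.
by apply: mulrn_neg.
Qed.

Lemma ratio_nth (al : seq G) (i : 'I_(size al)) : ratio_set al -> oglt al`_i 0.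
Proof. by move=> /allP H; apply: H; apply: mem_nth. Qed.

Lemma in_plus_neg (al : seq G) g : ratio_set al -> in_plus al g -> oglt g 0.
Proof.
move=> Hal [k [hk [i hi] ->]]; rewrite /rpow (bigD1 i) //=.
apply: ogle_ltadd; first by apply: mulrz_lt => //; apply: ratio_nth.
apply: (big_ind (fun x => ogle x 0)); first by rewrite /ogle eqxx.
  exact: ogle_add.
by move=> j _; apply: mulrz_le => //; apply: ratio_nth.
Qed.

Lemma in_plus_nonzero (al : seq G) : ratio_set al -> ~ in_plus al 0.
Proof. by move=> Hal /(in_plus_neg Hal); rewrite (negbTE (oglt_irr _)). Qed.

Lemma rpowD (mu : seq G) (k1 k2 : 'I_(size mu) -> int) :
  rpow (fun i => k1 i + k2 i) = rpow k1 + rpow k2.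
Proof. by rewrite /rpow -big_split /=; apply: eq_bigr => i _; rewrite mulrzDr. Qed.

Lemma rpowB (mu : seq G) (k1 k2 : 'I_(size mu) -> int) :
  rpow (fun i => k1 i - k2 i) = rpow k1 - rpow k2.
Proof.
rewrite /rpow -sumrB /=; apply: eq_bigr => i _; by rewrite mulrzBr.
Qed.

Lemma rpow0 (mu : seq G) : rpow (fun _ : 'I_(size mu) => 0) = 0.
Proof. by rewrite /rpow big1. Qed.

Lemma is_mag_uniq (T : ser G) m1 m2 : is_mag T m1 -> is_mag T m2 -> m1 = m2.
Proof.
move=> [h1 H1] [h2 H2]; apply/eqP; apply/negPn/negP => ne.
have a := H1 _ h2 (negbT (introF eqP (fun e => (negP ne) (introT eqP (esym e))))).
have b := H2 _ h1 ne.
by have := oglt_trans a b; rewrite (negbTE (oglt_irr _)).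
Qed.

Lemma gen_J (mu : seq G) (T : ser G) g : generates mu T -> T g != 0 -> in_J mu g.
Proof. by move=> [m Hm] /Hm [k [_ ->]]; exists k. Qed.

Lemma gen_grid (mu : seq G) (T : ser G) : ratio_set mu -> generates mu T -> grid_based T.
Proof.
move=> Hmu [m Hm]; exists mu, [:: rpow m]; split => // g /Hm [k [hk ->]].
exists (rpow m); first by rewrite mem_seq1.
exists (fun i => k i - m i); split; first by move=> i; rewrite subr_ge0.
by rewrite rpowB.
Qed.

Lemma plus_star (mu : seq G) x y z : in_plus mu (x - y) -> in_star mu (y - z) -> in_plus mu (x - z).
Proof.
move=> [k1 [h1 [i hi] e1]] [k2 [h2 e2]].
exists (fun j => k1 j + k2 j); split.
- by move=> j; rewrite addr_ge0.
- by exists i; rewrite paddr_eq0 // negb_and hi.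
- by rewrite rpowD -e1 -e2 addrA subrK.
Qed.

Lemma star_plus (mu : seq G) x : in_star mu x -> x != 0 -> in_plus mu x.
Proof.
move=> [k [hk e]] nx; exists k; split => //.
case: (boolP [exists j, k j != 0]) => [/existsP[j hj]|/existsPn Hk]; first by exists j.
case/negP: nx; rewrite e /rpow big1 // => j _.
by rewrite (eqP (negPn (Hk j))) mulr0z.
Qed.
End Aux.

Theorem proposition4p8 (G : ordered_group) (d : ser G -> ser G)
  (d_grid : forall T : ser G, grid_based T -> grid_based (d T))
  (d_strong : strongly_linear d)
  (mu alpha : seq G) (Hmu : ratio_set mu)
  (Halpha : derivative_addendum d mu alpha)
  (S T : ser G) :
  generates mu S -> generates mu T ->
  sprec mu S T -> ~ asymp1 T -> witnesses mu T ->
  sprec alpha (d S) (d T).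
Proof.
move=> gS gT hST hT wT a hda.
case: Halpha => Hal _ _ Hc.
have [s [_ Hs]] := d_strong S (gen_grid Hmu gS) a.
have : has (fun m => S m * d (mono m) a != 0) (undup s).
  apply/negPn/negP => /hasPn H; case/negP: hda; rewrite Hs big1_seq //.
  by move=> i /andP[_ /H /negPn /eqP].
case/hasP => m _; rewrite mulf_eq0 negb_or => /andP[Sm dm].
have [n Tn mn] := hST m Sm.
have [n0 magn0 sn] := wT n Tn.
have n0nz : n0 != 0 by apply/eqP => e; apply: hT; rewrite /asymp1 -e.
have Tn0 : T n0 != 0 by case: magn0.
have mn0 : mprec mu m n0 by exact: plus_star mn sn.
have [h magh sp] := Hc m n0 (gen_J gS Sm) (gen_J gT Tn0) mn0 n0nz.
have [b hb ab] := sp a dm.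
have eb : b = h by move: hb; rewrite /mono; case: (b =P h) => // _; rewrite eqxx.
subst b; exists h => //.
have [s2 [Hin Hs2]] := d_strong T (gen_grid Hmu gT) h.
have dn0 : d (mono n0) h != 0 by case: magh.
rewrite Hs2 (bigD1_seq n0) ?mem_undup ?undup_uniq //=; last exact: Hin.
rewrite big1_seq ?addr0; first exact: mulf_neq0.
move=> i /andP[ni _].
have [Ti|Ti] := eqVneq (T i) 0; first by rewrite Ti mul0r.
have [n' magn' si] := wT i Ti.
have e' := is_mag_uniq magn' magn0; subst n'.
have pi : mprec mu i n0 by apply: star_plus => //; rewrite subr_eq0.
have [h' magh' sp'] := Hc i n0 (gen_J gT Ti) (gen_J gT Tn0) pi n0nz.
have e2 := is_mag_uniq magh' magh; subst h'.
have [Dz|Dnz] := eqVneq (d (mono i) h) 0; first by rewrite Dz mulr0.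
have [b hb2 hhb] := sp' h Dnz.
have eb : b = h by move: hb2; rewrite /mono; case: (b =P h) => // _; rewrite eqxx.
subst b; exfalso; apply: (in_plus_nonzero Hal); by rewrite -(subrr h).
Qed.
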